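(* Let $\delta,\kappa,a,\alpha>0$ and $\varphi\in(-\pi/2,\pi/2)$, and put $d=2\pi\delta$, $\gamma=[-d,d]$, $\Gamma=\kappa\cos\varphi$, $q_0=\dfrac{2\pi\delta\kappa}{\cos\varphi}$. Let $\varepsilon^{(L)}:\gamma\to\mathbb{R}$ be continuous with $1<\varepsilon^{(L)}(z)\le E$ for all $z\in\gamma$, where $E=\max_{z\in\gamma}\varepsilon^{(L)}(z)>1$. Assume $$(E-1)q_0<1,\qquad \alpha<\alpha_0:=\frac{4}{27}\,\frac{1}{a^2}\,\frac{\bigl[1-(E-1)q_0\bigr]^3}{q_0}.$$ Then the cubic polynomial $P_K(p)=\alpha q_0p^3-\bigl(1-(E-1)q_0\bigr)p+a$ has two positive zeros $p_1<p_2$. Let $p\in(p_1,p_2)$ be such that $$t_0:=q_0\bigl(E-1+3\alpha p^2\bigr)<1,$$ and assume moreover $0<\alpha<\min\{\alpha_0,\alpha_1\}$ with $\alpha_1=\frac13\bigl\{q_0\,[1-(E-1)q_0]\bigr\}^{-1}$. Then the operator $T$ maps the closed ball $\bar S_p=\{U\in C(\gamma):\|U\|\le p\}$ into itself and is a contraction there: $\|T(U)-T(V)\|\le t_0\|U-V\|$ for all $U,V\in\bar S_p$.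
   Context: $C(\gamma)$ denotes the Banach space of continuous complex-valued functions on $\gamma$ with norm $\|U\|=\max_{z\in\gamma}|U(z)|$. The operator $T:C(\gamma)\to C(\gamma)$ is $$T(U)(z)=a\,e^{-i\Gamma(z-d)}-\frac{i\kappa^2}{2\Gamma}\int_{-d}^{d}e^{i\Gamma|z-z_0|}\Bigl[1-\varepsilon^{(L)}(z_0)-\alpha|U(z_0)|^2\Bigr]U(z_0)\,dz_0 ,$$ so that fixed points of $T$ are exactly the solutions of the nonlinear integral equation $$U(z)+\frac{i\kappa^2}{2\Gamma}\int_{-d}^{d}e^{i\Gamma|z-z_0|}\Bigl[1-\bigl(\varepsilon^{(L)}(z_0)+\alpha|U(z_0)|^2\bigr)\Bigr]U(z_0)\,dz_0=a\,e^{-i\Gamma(z-d)},\quad z\in\gamma \qquad(\ast)$$ (the integral equation for the field in a Kerr-nonlinear dielectric layer of thickness $4\pi\delta$ illuminated by a plane wave of amplitude $a$ at incidence angle $\varphi$). *)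

(* Defs.v *)
From Stdlib Require Import Reals Lra ClassicalEpsilon.
Open Scope R_scope.

Definition Cx := (R * R)%type.
Definition Cre (u : Cx) : R := fst u.
Definition Cim (u : Cx) : R := snd u.
Definition Cadd (u v : Cx) : Cx := (fst u + fst v, snd u + snd v).
Definition Csub (u v : Cx) : Cx := (fst u - fst v, snd u - snd v).
Definition Cmul (u v : Cx) : Cx :=
  (fst u * fst v - snd u * snd v, fst u * snd v + snd u * fst v).
Definition Cofr (r : R) : Cx := (r, 0).
Definition Ci : Cx := (0, 1).
Definition Cmod (u : Cx) : R := sqrt (fst u ^ 2 + snd u ^ 2).
Definition Cexpi (theta : R) : Cx := (cos theta, sin theta).

(* ---- total Riemann integral of a real function on [a,b]
   (the Stdlib RiemannInt when the function is Riemann integrable, 0 otherwise;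
   the value of RiemannInt does not depend on the integrability proof) ---- *)
Definition RInt (f : R -> R) (a b : R) : R :=
  match excluded_middle_informative (exists pr : Riemann_integrable f a b, True) with
  | left H => RiemannInt (proj1_sig (constructive_indefinite_description _ H))
  | right _ => 0
  end.

Definition CInt (f : R -> Cx) (a b : R) : Cx :=
  (RInt (fun x => fst (f x)) a b, RInt (fun x => snd (f x)) a b).

Definition in_gamma (d z : R) : Prop := - d <= z <= d.

(* continuity of a complex function relative to gamma (membership in C(gamma)) *)
Definition Ccont_on (d : R) (U : R -> Cx) : Prop :=
  forall x, in_gamma d x -> forall eps, 0 < eps ->
    exists del, 0 < del /\
      forall y, in_gamma d y -> Rabs (y - x) < del -> Cmod (Csub (U y) (U x)) < eps.

Definition Rcont_on (d : R) (f : R -> R) : Prop :=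
  forall x, in_gamma d x -> forall eps, 0 < eps ->
    exists del, 0 < del /\
      forall y, in_gamma d y -> Rabs (y - x) < del -> Rabs (f y - f x) < eps.

Definition T_op (a alpha kappa Gamma d : R) (epsL : R -> R) (U : R -> Cx) (z : R) : Cx :=
  Csub (Cmul (Cofr a) (Cexpi (- (Gamma * (z - d)))))
       (Cmul (Cmul Ci (Cofr (kappa ^ 2 / (2 * Gamma))))
             (CInt (fun z0 => Cmul (Cexpi (Gamma * Rabs (z - z0)))
                                   (Cmul (Cofr (1 - epsL z0 - alpha * (Cmod (U z0)) ^ 2)) (U z0)))
                   (- d) d)).

Definition PK (alpha q0 E a p : R) : R :=
  alpha * q0 * p ^ 3 - (1 - (E - 1) * q0) * p + a.

(* Main.v *)
Require Import Defs.
From Stdlib Require Import Reals Lra Psatz Ratan FunctionalExtensionality ClassicalEpsilon.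
Open Scope R_scope.

Lemma Cmod_nonneg u : 0 <= Cmod u.
Proof. unfold Cmod; apply sqrt_pos. Qed.

Lemma Cmod_sq u : Cmod u ^ 2 = fst u ^ 2 + snd u ^ 2.
Proof. unfold Cmod; rewrite pow2_sqrt; nra. Qed.

Lemma Cmod_le u r : 0 <= r -> fst u ^ 2 + snd u ^ 2 <= r ^ 2 -> Cmod u <= r.
Proof. intros. pose proof (Cmod_sq u). pose proof (Cmod_nonneg u). nra. Qed.

Lemma Cmod_eq u r : 0 <= r -> fst u ^ 2 + snd u ^ 2 = r ^ 2 -> Cmod u = r.
Proof. intros. pose proof (Cmod_sq u). pose proof (Cmod_nonneg u). nra. Qed.

Lemma Cmod_mul u v : Cmod (Cmul u v) = Cmod u * Cmod v.
Proof.
  apply Cmod_eq. pose proof (Cmod_nonneg u); pose proof (Cmod_nonneg v); nra.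
  rewrite Rpow_mult_distr, !Cmod_sq. destruct u, v; unfold Cmul; simpl. ring.
Qed.

Lemma Cmod_ofr r : Cmod (Cofr r) = Rabs r.
Proof. apply Cmod_eq. apply Rabs_pos. unfold Cofr; cbn [fst snd]. rewrite pow2_abs. ring. Qed.

Lemma Cmod_expi t : Cmod (Cexpi t) = 1.
Proof. apply Cmod_eq. lra. unfold Cexpi; simpl. pose proof (sin2_cos2 t). unfold Rsqr in *. nra. Qed.

Lemma Cmod_Ci : Cmod Ci = 1.
Proof. apply Cmod_eq. lra. unfold Ci; simpl. ring. Qed.

Lemma CS u v : fst u * fst v + snd u * snd v <= Cmod u * Cmod v.
Proof.
  pose proof (Cmod_sq u); pose proof (Cmod_sq v).
  pose proof (Cmod_nonneg u); pose proof (Cmod_nonneg v).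
  assert ((fst u * fst v + snd u * snd v)^2 <= (Cmod u * Cmod v)^2).
  { rewrite Rpow_mult_distr, H, H0. assert (0 <= (fst u * snd v - snd u * fst v)^2) by apply pow2_ge_0. nra. }
  set (s := fst u * fst v + snd u * snd v) in *. set (A := Cmod u * Cmod v) in *.
  assert (0 <= A) by (apply Rmult_le_pos; auto).
  destruct (Rle_dec s A); auto. exfalso. nra.
Qed.

Lemma Cmod_add_le u v : Cmod (Cadd u v) <= Cmod u + Cmod v.
Proof.
  apply Cmod_le. pose proof (Cmod_nonneg u); pose proof (Cmod_nonneg v); lra.
  pose proof (CS u v). pose proof (Cmod_sq u); pose proof (Cmod_sq v).
  destruct u, v; unfold Cadd; simpl in *. nra.
Qed.

Lemma Cmod_sub_le u v : Cmod (Csub u v) <= Cmod u + Cmod v.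
Proof.
  replace (Csub u v) with (Cadd u (Cmul (Cofr (-1)) v)).
  pose proof (Cmod_add_le u (Cmul (Cofr (-1)) v)).
  rewrite Cmod_mul, Cmod_ofr in H. replace (Rabs (-1)) with 1 in H by (unfold Rabs; destruct Rcase_abs; lra). lra.
  destruct u, v; unfold Cadd, Csub, Cmul, Cofr; simpl; f_equal; ring.
Qed.

Lemma Cmod_rev u v : Rabs (Cmod u - Cmod v) <= Cmod (Csub u v).
Proof.
  assert (Cmod u <= Cmod (Csub u v) + Cmod v).
  { replace u with (Cadd (Csub u v) v) at 1 by (destruct u, v; unfold Cadd, Csub; simpl; f_equal; ring).
    apply Cmod_add_le. }
  assert (Cmod v <= Cmod (Csub u v) + Cmod u).
  { replace v with (Csub u (Csub u v)) at 1 by (destruct u, v; unfold Cadd, Csub; simpl; f_equal; ring).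
    eapply Rle_trans; [apply Cmod_sub_le | lra]. }
  unfold Rabs; destruct Rcase_abs; lra.
Qed.

Lemma Cmod_fst u : Rabs (fst u) <= Cmod u.
Proof.
  pose proof (Cmod_sq u); pose proof (Cmod_nonneg u).
  rewrite <- (Rabs_pos_eq (Cmod u)) by auto. apply Rsqr_le_abs_0. unfold Rsqr. nra.
Qed.
Lemma Cmod_snd u : Rabs (snd u) <= Cmod u.
Proof.
  pose proof (Cmod_sq u); pose proof (Cmod_nonneg u).
  rewrite <- (Rabs_pos_eq (Cmod u)) by auto. apply Rsqr_le_abs_0. unfold Rsqr. nra.
Qed.
Lemma Cmod_comp u : Cmod u <= Rabs (fst u) + Rabs (snd u).
Proof.
  apply Cmod_le. pose proof (Rabs_pos (fst u)); pose proof (Rabs_pos (snd u)); lra.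
  rewrite <- (pow2_abs (fst u)), <- (pow2_abs (snd u)).
  pose proof (Rabs_pos (fst u)); pose proof (Rabs_pos (snd u)); nra.
Qed.

Lemma sin_abs_le x : Rabs (sin x) <= Rabs x.
Proof.
  assert (forall y, 0 < y -> Rabs (sin y) <= y).
  { intros y Hy. pose proof (sin_lt_x y Hy). pose proof (SIN_bound y).
    destruct (Rle_dec 1 y). unfold Rabs; destruct Rcase_abs; lra.
    assert (0 <= sin y) by (apply sin_ge_0; pose proof PI2_1; lra).
    rewrite Rabs_pos_eq; lra. }
  destruct (Rtotal_order x 0) as [h|[h|h]].
  - replace x with (- (- x)) by ring. rewrite sin_neg, Rabs_Ropp, Rabs_Ropp.
    rewrite (Rabs_pos_eq (-x)) by lra. apply H; lra.
  - subst; rewrite sin_0; lra.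
  - rewrite (Rabs_pos_eq x) by lra. auto.
Qed.

Lemma Cexpi_lip x y : Cmod (Csub (Cexpi x) (Cexpi y)) <= Rabs (x - y).
Proof.
  apply Cmod_le. apply Rabs_pos. unfold Cexpi, Csub; cbn [fst snd].
  assert (E: (cos x - cos y)^2 + (sin x - sin y)^2 = 2 - 2 * cos (x - y)).
  { rewrite cos_minus. pose proof (sin2_cos2 x); pose proof (sin2_cos2 y). unfold Rsqr in *. nra. }
  rewrite E. replace (x - y) with (2 * ((x - y)/2)) by field.
  rewrite cos_2a_sin. set (a := (x - y) / 2). pose proof (sin_abs_le a).
  rewrite pow2_abs.
  pose proof (Rabs_pos (sin a)).
  assert (Rabs (sin a) ^2 <= Rabs a ^2) by (apply pow_incr; lra).
  rewrite !pow2_abs in H1. nra.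
Qed.

Definition clamp (d x : R) := Rmax (- d) (Rmin d x).

Lemma clamp_in d x : 0 <= d -> in_gamma d (clamp d x).
Proof. intros; unfold clamp, in_gamma, Rmax, Rmin; repeat destruct Rle_dec; lra. Qed.
Lemma clamp_id d x : in_gamma d x -> clamp d x = x.
Proof. unfold clamp, in_gamma, Rmax, Rmin; intros; repeat destruct Rle_dec; lra. Qed.
Lemma clamp_lip d x y : 0 <= d -> Rabs (clamp d y - clamp d x) <= Rabs (y - x).
Proof.
  intros; unfold clamp, Rmax, Rmin; repeat destruct Rle_dec;
  unfold Rabs; repeat destruct Rcase_abs; lra.
Qed.

Lemma Rcont_clampc d f x : 0 <= d -> Rcont_on d f -> continuity_pt (fun y => f (clamp d y)) x.
Proof.
  intros Hd Hf. unfold continuity_pt, continue_in, limit1_in, limit_in; simpl; unfold R_dist.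
  intros eps Heps. destruct (Hf (clamp d x) (clamp_in d x Hd) eps Heps) as [del [Hdel H]].
  exists del; split; auto. intros y [_ Hy].
  apply H. apply clamp_in; auto. eapply Rle_lt_trans. apply clamp_lip; auto. auto.
Qed.

Lemma cont_Rcont d f g : (forall x, in_gamma d x -> continuity_pt g x) ->
  (forall x, in_gamma d x -> f x = g x) -> Rcont_on d f.
Proof.
  intros Hg Hfg x Hx eps Heps.
  pose proof (Hg x Hx) as C.
  unfold continuity_pt, continue_in, limit1_in, limit_in in C; simpl in C; unfold R_dist in C.
  destruct (C eps Heps) as [del [Hdel H]]. exists del; split; auto.
  intros y Hy Hyx. rewrite (Hfg y Hy), (Hfg x Hx).
  destruct (Req_dec x y). subst. unfold Rminus; rewrite Rplus_opp_r, Rabs_R0; auto.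
  apply H. split; auto. unfold D_x, no_cond; auto.
Qed.

Lemma Rcont_iff d f : 0 <= d -> Rcont_on d f ->
  exists g, (forall x, continuity_pt g x) /\ (forall x, in_gamma d x -> f x = g x).
Proof.
  intros Hd Hf. exists (fun y => f (clamp d y)); split.
  intros; apply Rcont_clampc; auto.
  intros; rewrite clamp_id; auto.
Qed.

Lemma Rcont_plus d f g : 0 <= d -> Rcont_on d f -> Rcont_on d g -> Rcont_on d (fun x => f x + g x).
Proof.
  intros Hd Hf Hg. destruct (Rcont_iff d f Hd Hf) as [f' [C1 E1]].
  destruct (Rcont_iff d g Hd Hg) as [g' [C2 E2]].
  apply cont_Rcont with (g := fun x => f' x + g' x).
  intros; apply continuity_pt_plus; auto.
  intros; rewrite E1, E2; auto.
Qed.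
Lemma Rcont_minus d f g : 0 <= d -> Rcont_on d f -> Rcont_on d g -> Rcont_on d (fun x => f x - g x).
Proof.
  intros Hd Hf Hg. destruct (Rcont_iff d f Hd Hf) as [f' [C1 E1]].
  destruct (Rcont_iff d g Hd Hg) as [g' [C2 E2]].
  apply cont_Rcont with (g := fun x => f' x - g' x).
  intros; apply continuity_pt_minus; auto.
  intros; rewrite E1, E2; auto.
Qed.
Lemma Rcont_mult d f g : 0 <= d -> Rcont_on d f -> Rcont_on d g -> Rcont_on d (fun x => f x * g x).
Proof.
  intros Hd Hf Hg. destruct (Rcont_iff d f Hd Hf) as [f' [C1 E1]].
  destruct (Rcont_iff d g Hd Hg) as [g' [C2 E2]].
  apply cont_Rcont with (g := fun x => f' x * g' x).
  intros; apply continuity_pt_mult; auto.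
  intros; rewrite E1, E2; auto.
Qed.
Lemma Rcont_comp d f g : 0 <= d -> continuity g -> Rcont_on d f -> Rcont_on d (fun x => g (f x)).
Proof.
  intros Hd Hg Hf. destruct (Rcont_iff d f Hd Hf) as [f' [C1 E1]].
  apply cont_Rcont with (g := fun x => g (f' x)).
  intros; apply (continuity_pt_comp f' g); auto.
  intros; rewrite E1; auto.
Qed.
Lemma Rcont_const d c : Rcont_on d (fun _ => c).
Proof.
  intros x _ eps Heps. exists 1; split; [lra|]. intros. unfold Rminus; rewrite Rplus_opp_r, Rabs_R0; auto.
Qed.
Lemma Rcont_id d : Rcont_on d (fun x => x).
Proof. intros x _ eps Heps. exists eps; split; auto. Qed.

Lemma Rcont_ext d f g : (forall x, f x = g x) -> Rcont_on d f -> Rcont_on d g.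
Proof. intros H; replace g with f; auto. apply functional_extensionality; auto. Qed.

Lemma Ccont_fst d U : Ccont_on d U -> Rcont_on d (fun x => fst (U x)).
Proof.
  intros H x Hx eps Heps. destruct (H x Hx eps Heps) as [del [Hd H']].
  exists del; split; auto. intros. eapply Rle_lt_trans; [|apply H'; eauto].
  apply (Cmod_fst (Csub (U y) (U x))).
Qed.
Lemma Ccont_snd d U : Ccont_on d U -> Rcont_on d (fun x => snd (U x)).
Proof.
  intros H x Hx eps Heps. destruct (H x Hx eps Heps) as [del [Hd H']].
  exists del; split; auto. intros. eapply Rle_lt_trans; [|apply H'; eauto].
  apply (Cmod_snd (Csub (U y) (U x))).
Qed.
Lemma Ccont_pair d f g : Rcont_on d f -> Rcont_on d g -> Ccont_on d (fun x => (f x, g x)).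
Proof.
  intros Hf Hg x Hx eps Heps.
  destruct (Hf x Hx (eps/2)) as [d1 [Hd1 H1]]; [lra|].
  destruct (Hg x Hx (eps/2)) as [d2 [Hd2 H2]]; [lra|].
  exists (Rmin d1 d2); split. apply Rmin_pos; auto.
  intros y Hy Hyx. eapply Rle_lt_trans. apply Cmod_comp. unfold Csub; cbn [fst snd].
  assert (Rabs (y - x) < d1) by (apply Rlt_le_trans with (Rmin d1 d2); [auto|apply Rmin_l]).
  assert (Rabs (y - x) < d2) by (apply Rlt_le_trans with (Rmin d1 d2); [auto|apply Rmin_r]).
  specialize (H1 y Hy H). specialize (H2 y Hy H0). lra.
Qed.
Lemma Rcont_Cmod d U : Ccont_on d U -> Rcont_on d (fun x => Cmod (U x)).
Proof.
  intros H x Hx eps Heps. destruct (H x Hx eps Heps) as [del [Hd H']].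
  exists del; split; auto. intros. eapply Rle_lt_trans; [|apply H'; eauto]. apply Cmod_rev.
Qed.

Lemma Rcont_int d f : 0 <= d -> Rcont_on d f -> Riemann_integrable f (- d) d.
Proof.
  intros Hd Hf. apply Riemann_integrable_ext with (f := fun y => f (clamp d y)).
  intros x Hx. rewrite clamp_id; auto. unfold in_gamma.
  rewrite Rmin_left, Rmax_right in Hx by lra. lra.
  apply continuity_implies_RiemannInt. lra. intros; apply Rcont_clampc; auto.
Qed.

Lemma RInt_eq f a b (pr : Riemann_integrable f a b) : RInt f a b = RiemannInt pr.
Proof.
  unfold RInt. destruct excluded_middle_informative as [H|H].
  apply RiemannInt_P5. exfalso; apply H; exists pr; auto.
Qed.

Lemma RInt_lin f g a b l : Riemann_integrable f a b -> Riemann_integrable g a b ->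
  RInt (fun x => f x + l * g x) a b = RInt f a b + l * RInt g a b.
Proof.
  intros p1 p2. rewrite (RInt_eq _ _ _ (RiemannInt_P10 l p1 p2)), (RInt_eq _ _ _ p1), (RInt_eq _ _ _ p2).
  apply RiemannInt_P13.
Qed.

Lemma RInt_scal f a b k : Riemann_integrable f a b ->
  RInt (fun x => k * f x) a b = k * RInt f a b.
Proof.
  intros p. pose proof (RInt_lin (fct_cte 0) f a b k (RiemannInt_P14 a b 0) p).
  rewrite (RInt_eq _ _ _ (RiemannInt_P14 a b 0)), RiemannInt_P15 in H.
  replace (fun x => k * f x) with (fun x => fct_cte 0 x + k * f x). rewrite H; ring.
  apply functional_extensionality; intros; unfold fct_cte; ring.
Qed.

Lemma RInt_sub f g a b : Riemann_integrable f a b -> Riemann_integrable g a b ->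
  RInt (fun x => f x - g x) a b = RInt f a b - RInt g a b.
Proof.
  intros p1 p2. pose proof (RInt_lin f g a b (-1) p1 p2).
  replace (fun x => f x - g x) with (fun x => f x + -1 * g x). rewrite H; ring.
  apply functional_extensionality; intros; ring.
Qed.

Lemma Rint_sub f g a b : Riemann_integrable f a b -> Riemann_integrable g a b ->
  Riemann_integrable (fun x => f x - g x) a b.
Proof.
  intros p1 p2. apply Riemann_integrable_ext with (f := fun x => f x + -1 * g x).
  intros; ring. apply RiemannInt_P10; auto.
Qed.

Lemma CInt_bound F a b K : a <= b ->
  Riemann_integrable (fun x => fst (F x)) a b ->
  Riemann_integrable (fun x => snd (F x)) a b ->
  (forall x, a <= x <= b -> Cmod (F x) <= K) ->
  Cmod (CInt F a b) <= K * (b - a).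
Proof.
  intros Hab p1 p2 HK.
  assert (HK0 : 0 <= K) by (eapply Rle_trans; [apply Cmod_nonneg| apply (HK a); lra]).
  set (I1 := RInt (fun x => fst (F x)) a b). set (I2 := RInt (fun x => snd (F x)) a b).
  assert (Hv : CInt F a b = (I1, I2)) by reflexivity.
  rewrite Hv.
  set (h := fun x => I1 * fst (F x) + I2 * snd (F x)).
  assert (ph : Riemann_integrable h a b).
  { apply RiemannInt_P10; auto. apply Riemann_integrable_scal; auto. }
  assert (Eh : RInt h a b = I1 * I1 + I2 * I2).
  { unfold h. rewrite (RInt_lin (fun x => I1 * fst (F x))); auto.
    rewrite RInt_scal; auto. apply Riemann_integrable_scal; auto. }
  set (m := Cmod (I1, I2)).
  assert (Hm : m ^ 2 = I1 * I1 + I2 * I2) by (unfold m; rewrite Cmod_sq; cbn [fst snd]; ring).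
  assert (Hm0 : 0 <= m) by apply Cmod_nonneg.
  assert (Hb : RInt h a b <= (m * K) * (b - a)).
  { rewrite (RInt_eq _ _ _ ph). refine (proj2 (@RiemannInt_const_bound h a b (-(m*K)) (m*K) ph Hab _)).
    intros x Hx. pose proof (HK x ltac:(lra)).
    pose proof (CS (I1, I2) (F x)). pose proof (CS (Cmul (Cofr (-1)) (I1, I2)) (F x)).
    rewrite Cmod_mul, Cmod_ofr in H1. replace (Rabs (-1)) with 1 in H1 by (unfold Rabs; destruct Rcase_abs; lra).
    unfold Cmul, Cofr in H1; cbn [fst snd] in H0, H1. fold m in H0, H1.
    unfold h. split; nra. }
  rewrite Eh, <- Hm in Hb. fold m. assert (0 <= K*(b-a)) by (apply Rmult_le_pos; lra).
  destruct (Rle_dec m (K*(b-a))); auto. exfalso. assert (m * m > m * (K * (b-a))) by (apply Rmult_lt_compat_l; lra). nra.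
Qed.

Lemma PK_cont alpha q0 E a : continuity (fun x => PK alpha q0 E a x).
Proof. unfold PK. reg. Qed.


Lemma cubic A c a : 0 < A -> 0 < c -> 0 < a -> 27 * a^2 * A < 4 * c ^ 3 ->
  exists p1 p2, 0 < p1 /\ p1 < p2 /\ A * p1^3 - c * p1 + a = 0 /\ A * p2^3 - c * p2 + a = 0 /\
    (forall x, 0 < x -> A * x^3 - c * x + a = 0 -> x = p1 \/ x = p2) /\
    (forall x, p1 < x < p2 -> A * x^3 - c * x + a < 0).
Proof.
  intros HA Hc Ha Hd.
  set (f := fun x => A * x^3 - c * x + a).
  assert (Cf : continuity f) by (unfold f; reg).
  set (s := sqrt (c / (3 * A))).
  assert (Hs2 : s ^ 2 = c / (3 * A)) by (unfold s; rewrite pow2_sqrt; [auto| apply Rlt_le; apply Rdiv_lt_0_compat; lra]).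
  assert (Hs : 0 < s) by (unfold s; apply sqrt_lt_R0; apply Rdiv_lt_0_compat; lra).
  assert (HAs : A * s^2 = c / 3) by (rewrite Hs2; field; lra).
  assert (Hfs : f s < 0).
  { unfold f. assert (A * s^3 = c/3 * s) by (replace (s^3) with (s^2*s) by ring; rewrite <- Rmult_assoc, HAs; ring).
    rewrite H.
    assert (a < 2 * c / 3 * s); [|lra].
    assert (a ^ 2 < (2 * c / 3 * s) ^ 2).
    { replace ((2 * c / 3 * s) ^ 2) with (4 * c^2 / 9 * s^2) by field. rewrite Hs2.
      apply Rmult_lt_reg_r with (27 * A); [lra|].
      replace (4 * c ^ 2 / 9 * (c / (3 * A)) * (27 * A)) with (4 * c^3) by (field; lra). lra. }
    assert (0 < 2 * c / 3 * s) by (apply Rmult_lt_0_compat; lra). nra. }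
  set (Y := sqrt (c / A)).
  assert (HY2 : Y ^ 2 = c / A) by (unfold Y; rewrite pow2_sqrt; [auto| apply Rlt_le; apply Rdiv_lt_0_compat; lra]).
  assert (HY : 0 < Y) by (unfold Y; apply sqrt_lt_R0; apply Rdiv_lt_0_compat; lra).
  assert (HfY : 0 < f Y).
  { unfold f. replace (Y^3) with (Y^2 * Y) by ring. rewrite HY2. replace (A * (c / A * Y)) with (c * Y) by (field; lra). lra. }
  assert (HsY : s < Y).
  { assert (s^2 < Y^2) by (rewrite Hs2, HY2; apply Rmult_lt_compat_l; [lra|]; apply Rinv_lt_contravar; nra). nra. }
  assert (Hf0 : 0 < f 0) by (unfold f; simpl; lra).
  destruct (IVT_cor f 0 s Cf ltac:(lra) ltac:(nra)) as [p1 [Hp1 Ep1]].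
  destruct (IVT_cor f s Y Cf ltac:(lra) ltac:(nra)) as [p2 [Hp2 Ep2]].
  assert (p1 <> 0) by (intro; subst; lra).
  assert (p1 <> s) by (intro; subst; lra).
  assert (p2 <> s) by (intro; subst; lra).
  unfold f in Ep1, Ep2.
  assert (Rel : A * (p1^2 + p1 * p2 + p2^2) = c).
  { assert ((p2 - p1) * (A * (p1^2 + p1 * p2 + p2^2) - c) = 0) by nra.
    apply Rmult_integral in H2. destruct H2; lra. }
  assert (Ea : a = A * p1 * p2 * (p1 + p2)) by nra.
  assert (Fact : forall x, A * x^3 - c * x + a = A * (x - p1) * (x - p2) * (x + p1 + p2)).
  { intros. rewrite Ea, <- Rel. ring. }
  exists p1, p2. repeat split; try lra.
  - intros x Hx Ex. rewrite Fact in Ex.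
    assert (A * (x - p1) * (x - p2) = 0).
    { apply Rmult_integral in Ex. destruct Ex; auto. lra. }
    apply Rmult_integral in H2. destruct H2. apply Rmult_integral in H2. destruct H2. lra. left; lra. right; lra.
  - intros x Hx. rewrite Fact.
    assert (0 < A * (x - p1)) by (apply Rmult_lt_0_compat; lra).
    assert (A * (x - p1) * (x - p2) < 0) by nra. nra.
Qed.

Definition Fint alpha Gamma (epsL : R -> R) (U : R -> Cx) z :=
  fun z0 => Cmul (Cexpi (Gamma * Rabs (z - z0)))
                 (Cmul (Cofr (1 - epsL z0 - alpha * Cmod (U z0) ^ 2)) (U z0)).

Lemma T_op_eq a alpha kappa Gamma d epsL U z :
  T_op a alpha kappa Gamma d epsL U z =
  Csub (Cmul (Cofr a) (Cexpi (- (Gamma * (z - d)))))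
       (Cmul (Cmul Ci (Cofr (kappa ^ 2 / (2 * Gamma)))) (CInt (Fint alpha Gamma epsL U z) (- d) d)).
Proof. reflexivity. Qed.

Lemma Ccont_mul d X Y : Ccont_on d X -> Ccont_on d Y -> 0 <= d -> Ccont_on d (fun x => Cmul (X x) (Y x)).
Proof.
  intros HX HY Hd.
  pose proof (Ccont_fst d X HX); pose proof (Ccont_snd d X HX).
  pose proof (Ccont_fst d Y HY); pose proof (Ccont_snd d Y HY).
  exact (Ccont_pair d _ _
    (Rcont_minus d _ _ Hd (Rcont_mult d _ _ Hd H H1) (Rcont_mult d _ _ Hd H0 H2))
    (Rcont_plus d _ _ Hd (Rcont_mult d _ _ Hd H H2) (Rcont_mult d _ _ Hd H0 H1))).
Qed.

Lemma Ccont_ofr d r : Rcont_on d r -> Ccont_on d (fun x => Cofr (r x)).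
Proof. intros H. exact (Ccont_pair d _ _ H (Rcont_const d 0)). Qed.

Lemma Ccont_expi d t : 0 <= d -> Rcont_on d t -> Ccont_on d (fun x => Cexpi (t x)).
Proof.
  intros Hd H. exact (Ccont_pair d _ _ (Rcont_comp d t cos Hd continuity_cos H)
                                  (Rcont_comp d t sin Hd continuity_sin H)).
Qed.

Lemma Fint_cont alpha Gamma epsL U z d : 0 <= d -> Rcont_on d epsL -> Ccont_on d U ->
  Ccont_on d (Fint alpha Gamma epsL U z).
Proof.
  intros Hd He HU. unfold Fint.
  apply Ccont_mul; auto.
  - apply Ccont_expi; auto. apply Rcont_mult; auto. apply Rcont_const.
    apply (Rcont_comp d (fun z0 => z - z0) Rabs Hd Rcontinuity_abs).
    apply Rcont_minus; auto. apply Rcont_const. apply Rcont_id.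
  - apply Ccont_mul; auto. apply Ccont_ofr.
    apply Rcont_minus; auto. apply Rcont_minus; auto. apply Rcont_const.
    apply Rcont_mult; auto. apply Rcont_const.
    apply Rcont_ext with (f := fun x => Cmod (U x) * (Cmod (U x) * 1)).
    intros; ring.
    apply Rcont_mult; auto. apply Rcont_Cmod; auto.
    apply Rcont_mult; auto. apply Rcont_Cmod; auto. apply Rcont_const.
Qed.

Lemma CInt_sub F G a b :
  Riemann_integrable (fun x => fst (F x)) a b -> Riemann_integrable (fun x => snd (F x)) a b ->
  Riemann_integrable (fun x => fst (G x)) a b -> Riemann_integrable (fun x => snd (G x)) a b ->
  Csub (CInt F a b) (CInt G a b) = CInt (fun x => Csub (F x) (G x)) a b.
Proof.
  intros. unfold CInt, Csub at 1; cbn [fst snd]. f_equal; symmetry; apply RInt_sub; auto.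
Qed.

Lemma Cmod_csub_mul k X Y : Cmod (Csub (Cmul k X) (Cmul k Y)) = Cmod k * Cmod (Csub X Y).
Proof.
  rewrite <- Cmod_mul. f_equal. destruct k, X, Y; unfold Csub, Cmul; cbn [fst snd]; f_equal; ring.
Qed.

Lemma Cmod_csub2 A' B' A B : Cmod (Csub (Csub A' B') (Csub A B)) <= Cmod (Csub A' A) + Cmod (Csub B' B).
Proof.
  replace (Csub (Csub A' B') (Csub A B)) with (Csub (Csub A' A) (Csub B' B)).
  apply Cmod_sub_le. destruct A', B', A, B; unfold Csub; cbn [fst snd]; f_equal; ring.
Qed.

Lemma Fint_bound alpha Gamma epsL U z z0 E p : 0 <= alpha ->
  1 < epsL z0 <= E -> Cmod (U z0) <= p ->
  Cmod (Fint alpha Gamma epsL U z z0) <= (E - 1 + alpha * p ^ 2) * p.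
Proof.
  intros Ha He Hu. unfold Fint. rewrite Cmod_mul, Cmod_expi, Cmod_mul, Cmod_ofr.
  pose proof (Cmod_nonneg (U z0)). set (m := Cmod (U z0)) in *.
  rewrite Rabs_left1 by nra.
  assert (m^2 <= p^2) by (apply pow_incr; lra).
  assert (0 <= - (1 - epsL z0 - alpha * m ^ 2) <= E - 1 + alpha * p ^2) by nra.
  assert (- (1 - epsL z0 - alpha * m ^ 2) * m <= (E - 1 + alpha * p ^ 2) * p) by (apply Rmult_le_compat; lra).
  lra.
Qed.


Lemma Cmod_csub_mul_r k l X : Cmod (Csub (Cmul k X) (Cmul l X)) = Cmod (Csub k l) * Cmod X.
Proof.
  rewrite <- Cmod_mul. f_equal. destruct k, X, l; unfold Csub, Cmul; cbn [fst snd]; f_equal; ring.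
Qed.

Lemma Fint_zdiff alpha Gamma epsL U z z' z0 K : 0 <= Gamma ->
  Cmod (Cmul (Cofr (1 - epsL z0 - alpha * Cmod (U z0) ^ 2)) (U z0)) <= K ->
  Cmod (Csub (Fint alpha Gamma epsL U z' z0) (Fint alpha Gamma epsL U z z0)) <= Gamma * Rabs (z' - z) * K.
Proof.
  intros HG HK. unfold Fint. rewrite Cmod_csub_mul_r.
  pose proof (Cexpi_lip (Gamma * Rabs (z' - z0)) (Gamma * Rabs (z - z0))).
  assert (Rabs (Gamma * Rabs (z' - z0) - Gamma * Rabs (z - z0)) <= Gamma * Rabs (z' - z)).
  { rewrite <- Rmult_minus_distr_l, Rabs_mult, (Rabs_pos_eq Gamma) by lra.
    apply Rmult_le_compat_l; auto.
    eapply Rle_trans. apply Rabs_triang_inv2. right; f_equal; ring. }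
  apply Rmult_le_compat; try apply Cmod_nonneg; lra.
Qed.

Lemma Fint_diff alpha Gamma epsL U V z z0 E p M : 0 <= alpha -> 0 <= p ->
  1 < epsL z0 <= E -> Cmod (U z0) <= p -> Cmod (V z0) <= p -> Cmod (Csub (U z0) (V z0)) <= M ->
  Cmod (Csub (Fint alpha Gamma epsL U z z0) (Fint alpha Gamma epsL V z z0)) <= (E - 1 + 3 * alpha * p ^ 2) * M.
Proof.
  intros Ha Hp He Hu Hv HM. unfold Fint. rewrite Cmod_csub_mul, Cmod_expi, Rmult_1_l.
  set (u := U z0) in *. set (v := V z0) in *. set (ep := epsL z0) in *.
  set (mu := Cmod u) in *. set (mv := Cmod v) in *.
  replace (Csub (Cmul (Cofr (1 - ep - alpha * mu ^ 2)) u) (Cmul (Cofr (1 - ep - alpha * mv ^ 2)) v))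
    with (Cadd (Cmul (Cofr (1 - ep)) (Csub u v))
               (Cmul (Cofr (- alpha)) (Cadd (Cmul (Cofr (mu ^ 2)) (Csub u v)) (Cmul (Cofr (mu ^ 2 - mv ^ 2)) v))))
    by (destruct u, v; unfold Cadd, Csub, Cmul, Cofr; cbn [fst snd]; f_equal; ring).
  eapply Rle_trans. apply Cmod_add_le.
  rewrite !Cmod_mul, !Cmod_ofr.
  pose proof (Cmod_add_le (Cmul (Cofr (mu ^ 2)) (Csub u v)) (Cmul (Cofr (mu ^ 2 - mv ^ 2)) v)) as H.
  rewrite !Cmod_mul, !Cmod_ofr in H.
  set (w := Cmod (Csub u v)) in *.
  set (X := Cmod (Cadd (Cmul (Cofr (mu ^ 2)) (Csub u v)) (Cmul (Cofr (mu ^ 2 - mv ^ 2)) v))) in *.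
  assert (0 <= mu) by apply Cmod_nonneg. assert (0 <= mv) by apply Cmod_nonneg.
  assert (0 <= w) by apply Cmod_nonneg.
  assert (Hrev : Rabs (mu - mv) <= w) by apply Cmod_rev.
  rewrite Rabs_Ropp, (Rabs_pos_eq alpha) by lra.
  rewrite (Rabs_pos_eq (mu ^ 2)) in H by nra.
  assert (E1 : Rabs (1 - ep) <= E - 1) by (rewrite Rabs_left1; lra).
  assert (E2 : Rabs (mu ^ 2 - mv ^ 2) <= 2 * p * w).
  { replace (mu ^ 2 - mv ^ 2) with ((mu - mv) * (mu + mv)) by ring.
    rewrite Rabs_mult, (Rabs_pos_eq (mu + mv)) by lra.
    replace (2 * p * w) with (w * (2 * p)) by ring.
    apply Rmult_le_compat; try lra. apply Rabs_pos. }
  assert (mu ^ 2 * w <= p ^ 2 * M) by (apply Rmult_le_compat; try nra; apply pow_incr; lra).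
  assert (Rabs (mu ^ 2 - mv ^ 2) * mv <= 2 * p * w * p) by (apply Rmult_le_compat; try lra; apply Rabs_pos).
  assert (2 * p * w * p <= 2 * p * M * p) by (apply Rmult_le_compat_r; auto; apply Rmult_le_compat_l; lra).
  assert (Rabs (1 - ep) * w <= (E - 1) * M) by (apply Rmult_le_compat; try lra; apply Rabs_pos).
  fold mv in H.
  assert (X <= 3 * p ^ 2 * M) by (replace (3 * p ^ 2 * M) with (p ^ 2 * M + 2 * p * M * p) by ring; lra).
  assert (alpha * X <= alpha * (3 * p ^ 2 * M)) by (apply Rmult_le_compat_l; lra).
  lra.
Qed.

Lemma Cmod_self X : Cmod (Csub X X) = 0.
Proof. apply Cmod_eq. lra. destruct X; unfold Csub; cbn [fst snd]. ring. Qed.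

Theorem theorem1
  (delta kappa a alpha phi E : R) (epsL : R -> R)
  (Hdelta : 0 < delta) (Hkappa : 0 < kappa) (Ha : 0 < a) (Halpha : 0 < alpha)
  (Hphi : - (PI / 2) < phi < PI / 2)
  (Heps_cont : Rcont_on (2 * PI * delta) epsL)
  (Heps_gt1 : forall z, in_gamma (2 * PI * delta) z -> 1 < epsL z)
  (HE_ub : forall z, in_gamma (2 * PI * delta) z -> epsL z <= E)
  (HE_att : exists z, in_gamma (2 * PI * delta) z /\ epsL z = E)
  (Hq0 : (E - 1) * (2 * PI * delta * kappa / cos phi) < 1)
  (Halpha0 : alpha < 4 / 27 * (1 / a ^ 2) *
       ((1 - (E - 1) * (2 * PI * delta * kappa / cos phi)) ^ 3
        / (2 * PI * delta * kappa / cos phi))) :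
  let d := 2 * PI * delta in
  let Gamma := kappa * cos phi in
  let q0 := 2 * PI * delta * kappa / cos phi in
  exists p1 p2 : R,
    0 < p1 /\ p1 < p2 /\ PK alpha q0 E a p1 = 0 /\ PK alpha q0 E a p2 = 0 /\
    (forall x, 0 < x -> PK alpha q0 E a x = 0 -> x = p1 \/ x = p2) /\
    forall p : R, p1 < p < p2 ->
      let t0 := q0 * (E - 1 + 3 * alpha * p ^ 2) in
      t0 < 1 ->
      alpha < / 3 * / (q0 * (1 - (E - 1) * q0)) ->
      (forall U : R -> Cx, Ccont_on d U ->
         (forall z, in_gamma d z -> Cmod (U z) <= p) ->
         Ccont_on d (T_op a alpha kappa Gamma d epsL U) /\
         forall z, in_gamma d z -> Cmod (T_op a alpha kappa Gamma d epsL U z) <= p) /\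
      (forall U V : R -> Cx, Ccont_on d U -> Ccont_on d V ->
         (forall z, in_gamma d z -> Cmod (U z) <= p) ->
         (forall z, in_gamma d z -> Cmod (V z) <= p) ->
         forall M, (forall z, in_gamma d z -> Cmod (Csub (U z) (V z)) <= M) ->
         forall z, in_gamma d z ->
           Cmod (Csub (T_op a alpha kappa Gamma d epsL U z)
                      (T_op a alpha kappa Gamma d epsL V z)) <= t0 * M).
Proof.
  intros d Gamma q0.
  assert (Hcos : 0 < cos phi) by (apply cos_gt_0; lra).
  pose proof PI_RGT_0 as HPI.
  assert (Hd : 0 < d) by (unfold d; apply Rmult_lt_0_compat; lra).
  assert (HG : 0 < Gamma) by (unfold Gamma; apply Rmult_lt_0_compat; lra).
  assert (Hq : 0 < q0) by (unfold q0; apply Rdiv_lt_0_compat; [apply Rmult_lt_0_compat; [apply Rmult_lt_0_compat|]; lra|auto]).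
  assert (Hgam : forall z, in_gamma d z -> 1 < epsL z <= E) by (intros; split; auto).
  assert (HE1 : 1 < E) by (destruct HE_att as [z0 [Hz0 Ez0]]; rewrite <- Ez0; auto).
  set (c := 1 - (E - 1) * q0).
  assert (Hc : 0 < c) by (unfold c; change (2 * PI * delta * kappa / cos phi) with q0 in Hq0; lra).
  change (2 * PI * delta * kappa / cos phi) with q0 in Halpha0. fold c in Halpha0.
  assert (Hdisc : 27 * a ^ 2 * (alpha * q0) < 4 * c ^ 3).
  { assert (0 < a^2) by nra.
    apply Rmult_lt_compat_l with (r := 27 * a^2 * q0) in Halpha0; [|nra].
    replace (27 * a ^ 2 * q0 * (4 / 27 * (1 / a ^ 2) * (c ^ 3 / q0))) with (4 * c^3) in Halpha0 by (field; lra).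
    lra. }
  assert (HPK : forall x, PK alpha q0 E a x = (alpha * q0) * x ^ 3 - c * x + a) by (intros; unfold PK, c; ring).
  destruct (cubic (alpha * q0) c a ltac:(nra) Hc Ha Hdisc) as [p1 [p2 [Hp1 [H12 [R1 [R2 [Uniq Neg]]]]]]].
  exists p1, p2. rewrite !HPK. split; [auto|]. split; [auto|]. split; [auto|]. split; [auto|].
  split. { intros x Hx Ex. rewrite HPK in Ex. auto. }
  intros p Hp t0 Ht0 Ha1.
  assert (Hp0 : 0 < p) by lra.
  pose proof (Neg p Hp) as HNp.
  set (kc := kappa ^ 2 / (2 * Gamma)).
  assert (Hkc : Cmod (Cmul Ci (Cofr kc)) = kc).
  { rewrite Cmod_mul, Cmod_Ci, Cmod_ofr, Rmult_1_l. apply Rabs_pos_eq. unfold kc. apply Rlt_le, Rdiv_lt_0_compat; nra. }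
  assert (Hkc0 : 0 <= kc) by (rewrite <- Hkc; apply Cmod_nonneg).
  assert (Hkq : kc * (d - - d) = q0) by (unfold kc, Gamma, d, q0; field; lra).
  assert (Hd0 : 0 <= d) by lra.
  assert (Hint : forall U z, Ccont_on d U ->
     (Riemann_integrable (fun x => fst (Fint alpha Gamma epsL U z x)) (- d) d *
     Riemann_integrable (fun x => snd (Fint alpha Gamma epsL U z x)) (- d) d)%type).
  { intros U z HU. split; apply Rcont_int; auto.
    apply Ccont_fst, Fint_cont; auto. apply Ccont_snd, Fint_cont; auto. }
  set (K0 := (E - 1 + alpha * p ^ 2) * p).
  assert (HK0 : 0 <= K0) by (unfold K0; apply Rmult_le_pos; nra).
  split.
  - intros U HU HUp.
    assert (Hin : forall z z0, in_gamma d z0 -> Cmod (Fint alpha Gamma epsL U z z0) <= K0).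
    { intros; apply Fint_bound; auto; lra. }
    assert (Hin' : forall z0, in_gamma d z0 ->
       Cmod (Cmul (Cofr (1 - epsL z0 - alpha * Cmod (U z0) ^ 2)) (U z0)) <= K0).
    { intros z0 Hz0. pose proof (Hin 0 z0 Hz0) as H. unfold Fint in H.
      rewrite Cmod_mul, Cmod_expi, Rmult_1_l in H. auto. }
    split.
    + intros z Hz eps Heps.
      set (L := a * Gamma + kc * (Gamma * K0 * (d - - d))).
      assert (HL : 0 <= L) by (unfold L; apply Rplus_le_le_0_compat; [nra|]; apply Rmult_le_pos; auto; apply Rmult_le_pos; nra).
      exists (eps / (L + 1)). split. apply Rdiv_lt_0_compat; lra.
      intros y Hy Hyz.
      rewrite !T_op_eq. fold kc. eapply Rle_lt_trans. apply Cmod_csub2.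
      rewrite !Cmod_csub_mul, Cmod_ofr, Rabs_pos_eq by lra. rewrite Hkc.
      destruct (Hint U y HU) as [Iy1 Iy2]. destruct (Hint U z HU) as [Iz1 Iz2].
      rewrite CInt_sub by auto.
      assert (B1 : Cmod (Csub (Cexpi (- (Gamma * (y - d)))) (Cexpi (- (Gamma * (z - d))))) <= Gamma * Rabs (y - z)).
      { eapply Rle_trans. apply Cexpi_lip. right.
        replace (- (Gamma * (y - d)) - - (Gamma * (z - d))) with (- (Gamma * (y - z))) by ring.
        rewrite Rabs_Ropp, Rabs_mult, Rabs_pos_eq; lra. }
      assert (B2 : Cmod (CInt (fun x => Csub (Fint alpha Gamma epsL U y x) (Fint alpha Gamma epsL U z x)) (- d) d)
                   <= (Gamma * Rabs (y - z) * K0) * (d - - d)).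
      { apply CInt_bound. lra.
        exact (Rint_sub _ _ _ _ Iy1 Iz1). exact (Rint_sub _ _ _ _ Iy2 Iz2).
        intros x Hx. apply Fint_zdiff. lra. apply Hin'. unfold in_gamma; lra. }
      assert (Hr : 0 <= Rabs (y - z)) by apply Rabs_pos.
      assert (a * Cmod (Csub (Cexpi (- (Gamma * (y - d)))) (Cexpi (- (Gamma * (z - d))))) <= a * (Gamma * Rabs (y - z)))
        by (apply Rmult_le_compat_l; lra).
      assert (kc * Cmod (CInt (fun x => Csub (Fint alpha Gamma epsL U y x) (Fint alpha Gamma epsL U z x)) (- d) d)
              <= kc * (Gamma * Rabs (y - z) * K0 * (d - - d))) by (apply Rmult_le_compat_l; lra).
      assert (L * Rabs (y - z) <= L * (eps / (L + 1))) by (apply Rmult_le_compat_l; lra).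
      assert (L * (eps / (L + 1)) < eps).
      { apply Rmult_lt_reg_r with (L + 1); [lra|]. field_simplify; [|lra]. nra. }
      assert (a * (Gamma * Rabs (y - z)) + kc * (Gamma * Rabs (y - z) * K0 * (d - - d)) = L * Rabs (y - z))
        by (unfold L; ring).
      lra.
    + intros z Hz. rewrite T_op_eq. fold kc. eapply Rle_trans. apply Cmod_sub_le.
      rewrite (Cmod_mul (Cofr a)), Cmod_ofr, Cmod_expi, (Cmod_mul (Cmul Ci (Cofr kc))), Hkc, (Rabs_pos_eq a) by lra.
      destruct (Hint U z HU) as [I1 I2].
      assert (Cmod (CInt (Fint alpha Gamma epsL U z) (- d) d) <= K0 * (d - - d)).
      { apply CInt_bound; [lra|auto|auto|]. intros; apply Hin. unfold in_gamma; lra. }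
      assert (kc * Cmod (CInt (Fint alpha Gamma epsL U z) (- d) d) <= kc * (K0 * (d - - d))) by (apply Rmult_le_compat_l; lra).
      assert (kc * (K0 * (d - - d)) = q0 * K0) by (rewrite <- Hkq; ring).
      assert (q0 * K0 = p - c * p + alpha * q0 * p ^ 3) by (unfold K0, c; ring). lra.
  - intros U V HU HV HUp HVp M HM z Hz.
    rewrite !T_op_eq. fold kc. eapply Rle_trans. apply Cmod_csub2.
    rewrite Cmod_self, Rplus_0_l, Cmod_csub_mul, Hkc.
    destruct (Hint U z HU) as [IU1 IU2]. destruct (Hint V z HV) as [IV1 IV2].
    rewrite CInt_sub by auto.
    assert (Cmod (CInt (fun x => Csub (Fint alpha Gamma epsL U z x) (Fint alpha Gamma epsL V z x)) (- d) d)
            <= ((E - 1 + 3 * alpha * p ^ 2) * M) * (d - - d)).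
    { apply CInt_bound. lra.
      exact (Rint_sub _ _ _ _ IU1 IV1). exact (Rint_sub _ _ _ _ IU2 IV2).
      intros x Hx. assert (Hx' : in_gamma d x) by (unfold in_gamma; lra).
      apply Fint_diff; auto; lra. }
    assert (kc * Cmod (CInt (fun x => Csub (Fint alpha Gamma epsL U z x) (Fint alpha Gamma epsL V z x)) (- d) d)
            <= kc * ((E - 1 + 3 * alpha * p ^ 2) * M * (d - - d))) by (apply Rmult_le_compat_l; lra).
    assert (kc * ((E - 1 + 3 * alpha * p ^ 2) * M * (d - - d)) = t0 * M) by (unfold t0; rewrite <- Hkq; ring).
    lra.
Qed.
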